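(* Let $G$ be a connected chordal graph and $X\subseteq V(G)$ a vertex subset such that $G[X]$ is connected. Then there is a bijection $f$ from the set of connected components of $G[N_G(X)]$ to the set of connected components of $G-X$ such that a connected component $C$ of $G[N_G(X)]$ is contained in a connected component $H$ of $G-X$ if and only if $H=f(C)$.
   Context: A graph is chordal if it has no induced cycle of length at least $4$. For $X\subseteq V(G)$, $N_G(X)=(\bigcup_{v\in X}N_G(v))\setminus X$. *)

(* Defs.v *)
(* A simple graph is a symmetric irreflexive relation e on a finType T. *)
From mathcomp Require Import all_boot.
Set Implicit Arguments. Unset Strict Implicit. Unset Printing Implicit Defensive.

Section Graphs.
Variable T : finType.
Variable e : rel T.

Definition induced_rel (S : {set T}) : rel T :=
  [rel x y | [&& x \in S, y \in S & e x y]].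

Definition comp_of (S : {set T}) (x : T) : {set T} :=
  [set y | connect (induced_rel S) x y].

Definition components (S : {set T}) : {set {set T}} :=
  [set comp_of S x | x in S].

Definition connected_on (S : {set T}) : Prop :=
  S != set0 /\ forall x y, x \in S -> y \in S -> connect (induced_rel S) x y.

Definition nbhd (X : {set T}) : {set T} :=
  [set y | (y \notin X) && [exists x in X, e x y]].

Definition induced_long_cycle (s : seq T) : Prop :=
  [/\ 3 < size s, uniq s, cycle e s &
      forall x y, x \in s -> y \in s -> e x y -> (y == next s x) || (x == next s y)].

Definition chordal : Prop := forall s : seq T, ~ induced_long_cycle s.

End Graphs.

(* Main.v *)
Require Import Defs.
From mathcomp Require Import all_boot.
From mathcomp Require Import zify.
From Stdlib Require Import Classical.
Set Implicit Arguments. Unset Strict Implicit. Unset Printing Implicit Defensive.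

Lemma min_ex (P : nat -> Prop) : (exists k, P k) -> exists k, P k /\ forall k', k' < k -> ~ P k'.
Proof.
move=> [k Pk].
suff H : forall n k, k <= n -> P k -> exists k, P k /\ forall k', k' < k -> ~ P k'.
  exact: (H k k).
elim=> [|n IH] k0 Hk Pk0.
  exists k0; split=> // k' Hk'; lia.
case: (classic (exists k', k' < k0 /\ P k')) => [[k' [H1 H2]]|Hn].
  apply: (IH k') => //; lia.
exists k0; split=> // k' Hk' Pk'; apply: Hn; by exists k'.
Qed.

Section G.
Variable T : finType.
Variable e : rel T.
Hypothesis e_sym : symmetric e.
Hypothesis e_irr : irreflexive e.

Definition wk (S : {set T}) (p : nat -> T) k :=
  [/\ (forall i, i <= k -> p i \in S), (forall i, i < k -> e (p i) (p i.+1)) &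
      (forall i j, i <= k -> j <= k -> p i = p j -> i = j)].

Lemma walk_of_connect (S : {set T}) x y : x \in S -> connect (induced_rel e S) x y ->
  exists p k, [/\ p 0 = x, p k = y & wk S p k].
Proof.
move=> xS /connectP [q Hq ->].
case: (shortenP Hq) => q' Hq' Hu _.
exists (fun i => nth x (x :: q') i), (size q'); split => //.
  by rewrite (last_nth x).
move/(pathP x): Hq' => Hq'.
split.
- case=> [|i] Hi //. have := Hq' i Hi. by rewrite /= => /and3P [].
- move=> i Hi; have := Hq' i Hi. by rewrite /= => /and3P [].
- move=> i j Hi Hj Hij; apply/eqP; rewrite -(nth_uniq x _ _ Hu) //=; first by apply/eqP.
Qed.

Lemma wk_take S p k i : wk S p k -> i <= k -> wk S p i.
Proof.
move=> [H1 H2 H3] Hi; split=> [j Hj|j Hj|j l Hj Hl]; [apply H1|apply H2|apply H3]; lia.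
Qed.

Lemma wk_drop S p k i : wk S p k -> i <= k -> wk S (fun m => p (m + i)) (k - i).
Proof.
move=> [H1 H2 H3] Hi; split=> [j Hj|j Hj|j l Hj Hl E].
- apply H1; lia.
- have -> : (j.+1 + i) = (j + i).+1 by lia. apply H2; lia.
- have := H3 _ _ _ _ E; lia.
Qed.

Lemma wk_splice S p k i j : wk S p k -> i < j -> j <= k -> e (p i) (p j) ->
  wk S (fun m => if m <= i then p m else p (m + (j - i).-1)) (k - (j - i).-1).
Proof.
move=> [H1 H2 H3] Hij Hj E; split.
- move=> m Hm; case: ifP => _; apply H1; lia.
- move=> m Hm /=; case: (ltngtP m i) => Hmi.
  + simpl. apply H2; lia.
  + simpl.
    have -> : (m.+1 + (j - i).-1) = (m + (j - i).-1).+1 by lia. apply H2; lia.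
  + subst m; simpl.
    have -> : (i.+1 + (j - i).-1) = j by lia. done.
- move=> m l Hm Hl; case: ifP => Hm'; case: ifP => Hl' Eq; have := H3 _ _ _ _ Eq; lia.
Qed.


Lemma ilc (h : nat -> T) n :
 3 < n -> (forall a b, a < n -> b < n -> h a = h b -> a = b) ->
 (forall t, t.+1 < n -> e (h t) (h t.+1)) -> e (h n.-1) (h 0) ->
 (forall a b, a < b -> b < n -> e (h a) (h b) -> b = a.+1 \/ (a = 0 /\ b = n.-1)) ->
 induced_long_cycle e (mkseq h n).
Proof.
move=> Hn3 H2 H3 H4 H5.
set s := mkseq h n.
have Hs : size s = n by rewrite size_mkseq.
have Hn : forall i, i < n -> nth (h 0) s i = h i by move=> i Hi; rewrite nth_mkseq.
have Hu : uniq s.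
  apply/mkseq_uniqP => a b Ha Hb; apply: H2; [exact: Ha | exact: Hb].
have Hnext : forall i, i < n -> next s (h i) = h (if i.+1 < n then i.+1 else 0).
  move=> i Hi; rewrite next_nth.
  have Hm : h i \in s by rewrite -Hn // mem_nth // Hs.
  have Hidx : index (h i) s = i by rewrite -Hn // index_uniq // Hs.
  rewrite Hm.
  case Es: s Hs Hidx Hn => [|y s'] Hs' Hidx Hn'; first by move: Hs'; rewrite /= => Hs'; lia.
  have Ey : y = h 0 by rewrite -(Hn' 0) //; lia.
  rewrite Hidx; case: ifP => Hc.
  - rewrite -(Hn' i.+1) //= Ey; apply: set_nth_default; move: Hs' => /= Hs'; lia.
  - subst y; rewrite nth_default //; move: Hs' => /= Hs'; lia.
split.
- by rewrite Hs.
- exact: Hu.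
- rewrite (cycle_path (h 0)); apply/(pathP (h 0)) => i; rewrite Hs => Hi.
  case: i Hi => [|i] Hi.
  + rewrite /= -nth_last Hs !Hn //; lia.
  + rewrite /= !Hn //; [apply H3 | ]; lia.
- move=> x y /(nthP (h 0)) [a Ha <-] /(nthP (h 0)) [b Hb <-].
  rewrite Hs in Ha Hb; rewrite !Hn // => Exy.
  rewrite !Hnext //.
  case: (ltngtP a b) => Hab.
  + case: (H5 a b Hab Hb Exy) => [->|[-> ->]].
    * have -> : a.+1 < n by lia. by rewrite eqxx.
    * apply/orP; right; rewrite ifF ?eqxx //; lia.
  + rewrite e_sym in Exy.
    case: (H5 b a Hab Ha Exy) => [->|[-> ->]].
    * have -> : b.+1 < n by lia. by rewrite eqxx orbT.
    * apply/orP; left; rewrite ifF ?eqxx //; lia.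
  + by subst b; rewrite e_irr in Exy.
Qed.


Lemma irel_sym (S : {set T}) : symmetric (induced_rel e S).
Proof. by move=> x y; rewrite /induced_rel /= e_sym; case: (x \in S); case: (y \in S). Qed.

Lemma conn_in (S : {set T}) x y : x \in S -> connect (induced_rel e S) x y -> y \in S.
Proof.
move=> xS /connectP [p Hp ->]; elim: p x xS Hp => [|z p IH] x xS //=.
by move=> /andP [/and3P [_ zS _] Hp]; apply: IH.
Qed.

Lemma comp_in (S : {set T}) x : x \in comp_of e S x.
Proof. by rewrite inE connect0. Qed.

Lemma comp_same (S : {set T}) x y : y \in comp_of e S x -> comp_of e S y = comp_of e S x.
Proof.
rewrite inE => Hxy; apply/setP => z; rewrite !inE; apply/idP/idP => H.
- exact: connect_trans Hxy H.
- apply: connect_trans _ H; by rewrite (sym_connect_sym (@irel_sym S)).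
Qed.

Lemma comp_eq (S : {set T}) a b z : z \in comp_of e S a -> z \in comp_of e S b ->
  comp_of e S a = comp_of e S b.
Proof. by move=> /comp_same <- /comp_same <-. Qed.

Lemma comp_sub (S : {set T}) x y : x \in S -> y \in comp_of e S x -> y \in S.
Proof. by move=> xS; rewrite inE; apply: conn_in. Qed.

Lemma comp_mono (S1 S2 : {set T}) x y : S1 \subset S2 -> y \in comp_of e S1 x -> y \in comp_of e S2 x.
Proof.
move=> /subsetP H12; rewrite !inE; apply: connect_sub => a b /and3P [aS bS Eab].
by apply: connect1; rewrite /induced_rel /= Eab !H12.
Qed.


Lemma inN (X : {set T}) y : (y \in nbhd e X) = (y \notin X) && [exists x in X, e x y].
Proof. by rewrite /nbhd inE. Qed.

Lemma NsubY (X : {set T}) : nbhd e X \subset ~: X.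
Proof. by apply/subsetP => y; rewrite inN inE => /andP []. Qed.

Ltac prune := repeat match goal with
  | H : ?P |- _ => lazymatch P with
       | is_true (leq _ _) => fail
       | @eq nat _ _ => fail
       | @eq bool _ _ => fail
       | is_true (~~ _) => fail
       | nat => fail
       | _ => clear H end
  end.
Ltac slia := prune; lia.

Lemma key (X : {set T}) c1 c2 : chordal e -> connected_on e X ->
  c1 \in nbhd e X -> c2 \in nbhd e X -> c2 \in comp_of e (~: X) c1 ->
  c2 \notin comp_of e (nbhd e X) c1 -> False.
Proof.
move=> Hch [_ HX] c1N c2N c12 c2C1.
set N := nbhd e X in c1N c2N c2C1 *; set Y := ~: X in c12 *.
set C1 := comp_of e N c1 in c2C1.
have C1N : forall y, y \in C1 -> y \in N by move=> y; apply: comp_sub.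
have c1Y : c1 \in Y by apply: (subsetP (NsubY X)).
have [k [[p [p0 pk pk' Wp]] Hmin]] :
    exists k, (exists p, [/\ p 0 \in C1, p k \in N, p k \notin C1 & wk Y p k]) /\
      forall k', k' < k -> ~ exists p, [/\ p 0 \in C1, p k' \in N, p k' \notin C1 & wk Y p k'].
  apply: min_ex.
  have c12' : connect (induced_rel e Y) c1 c2 by move: c12; rewrite inE.
  have [p [k [E0 Ek W]]] := walk_of_connect c1Y c12'.
  exists k, p; split; rewrite ?E0 ?Ek //; exact: comp_in.
have uN : p 0 \in N by apply: C1N.
have [HpY Hpe Hpi] := Wp.
have HC1 : forall y, y \in C1 -> comp_of e N y = C1 by move=> y; apply: comp_same.
have k2 : 1 < k.
  case: (ltnP 1 k) => // Hk; exfalso.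
  have [Ek|Ek] : k = 0 \/ k = 1 by slia. 
  - by subst k; rewrite p0 in pk'.
  - subst k; move/negP: pk'; apply; rewrite -(HC1 _ p0) inE; apply: connect1.
    by rewrite /induced_rel /= uN pk Hpe.
have P2 : forall i, 0 < i -> i < k -> p i \notin N.
  move=> i Hi0 Hik; apply/negP => piN.
  case: (boolP (p i \in C1)) => piC1.
  - apply: (Hmin (k - i)); first slia.
    exists (fun m => p (m + i)); split => //=.
    + by rewrite subnK //; slia.
    + by rewrite subnK //; slia.
    + apply: wk_drop => //; slia.
  - apply: (Hmin i) => //; exists p; split => //; apply: wk_take Wp _; slia.
have P3 : forall a b, a.+1 < b -> b <= k -> ~~ e (p a) (p b).
  move=> a b Hab Hbk; apply/negP => Eab.
  apply: (Hmin (k - (b - a).-1)); first slia.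
  exists (fun m => if m <= a then p m else p (m + (b - a).-1)); split; cbv beta.
  - by rewrite leq0n.
  - rewrite ifF; last slia. have -> : k - (b - a).-1 + (b - a).-1 = k by slia. done.
  - rewrite ifF; last slia. have -> : k - (b - a).-1 + (b - a).-1 = k by slia. done.
  - apply: wk_splice => //; slia.
have [x1 x1X Ex1] : exists2 x, x \in X & e x (p k).
  move: pk; rewrite inN => /andP [_ /existsP [x /andP [H1 H2]]]; exists x; [exact: H1 | exact: H2].
have [x2 x2X Ex2] : exists2 x, x \in X & e x (p 0).
  move: uN; rewrite inN => /andP [_ /existsP [x /andP [H1 H2]]]; exists x; [exact: H1 | exact: H2].
have [m [[g [g0 gm Wg]] Hmin2]] :
    exists m, (exists g, [/\ e (p k) (g 0), e (g m) (p 0) & wk X g m]) /\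
      forall m', m' < m -> ~ exists g, [/\ e (p k) (g 0), e (g m') (p 0) & wk X g m'].
  apply: min_ex.
  have [g [m [E0 Em W]]] := walk_of_connect x1X (HX _ _ x1X x2X).
  exists m, g; split => //; [by rewrite E0 e_sym | by rewrite Em].
have [HgX Hge Hgi] := Wg.
have R1 : forall j, j < m -> ~~ e (g j) (p 0).
  move=> j Hj; apply/negP => E; apply: (Hmin2 j Hj); exists g; split => //.
  apply: wk_take Wg _; slia.
have R2 : forall j, 0 < j -> j <= m -> ~~ e (p k) (g j).
  move=> j Hj0 Hj; apply/negP => E; apply: (Hmin2 (m - j)); first slia.
  exists (fun i => g (i + j)); split; cbv beta.
  - by [].
  - by rewrite subnK.
  - exact: wk_drop.
have R3 : forall a b, a.+1 < b -> b <= m -> ~~ e (g a) (g b).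
  move=> a b Hab Hbm; apply/negP => Eab.
  apply: (Hmin2 (m - (b - a).-1)); first slia.
  exists (fun i => if i <= a then g i else g (i + (b - a).-1)); split; cbv beta.
  - by rewrite leq0n.
  - rewrite ifF; last slia. have -> : m - (b - a).-1 + (b - a).-1 = m by slia. done.
  - apply: wk_splice => //; slia.
have pX : forall i, i <= k -> p i \notin X.
  by move=> i Hi; have := HpY i Hi; rewrite inE.
pose h t := if t <= k then p t else g (t - k.+1).
apply: (Hch (mkseq h (k + m + 2))).
apply: ilc.
- slia.
- move=> a b Ha Hb; rewrite /h.
  case: ifP => Hak; case: ifP => Hbk Eh.
  + exact: Hpi.
  + exfalso; move/negP: (pX a Hak); apply; rewrite Eh; apply: HgX; slia.
  + exfalso; move/negP: (pX b Hbk); apply; rewrite -Eh; apply: HgX; slia.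
  + have H1 : a - k.+1 <= m by slia.
    have H2 : b - k.+1 <= m by slia.
    have := Hgi _ _ H1 H2 Eh; slia.
- move=> t Ht; rewrite /h.
  case: (ltngtP t k) => Htk.
  + exact: Hpe.
  +
    have -> : t.+1 - k.+1 = (t - k.+1).+1 by slia. apply: Hge; slia.
  + subst t; by rewrite subnn.
- rewrite /h ifF; last slia. rewrite leq0n.
  have -> : (k + m + 2).-1 - k.+1 = m by slia. exact: gm.
- move=> a b Hab Hb; rewrite /h.
  case: (leqP b k) => Hbk.
  + rewrite ifT; last slia. move=> Eab; left.
    case: (ltngtP b a.+1) => // H; first slia.
    by move: (P3 a b H Hbk); rewrite Eab.
  + case: (leqP a k) => Hak Eab.
    * have paN : p a \in N.
        rewrite inN pX //=; apply/existsP; exists (g (b - k.+1)).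
        rewrite e_sym Eab andbT; apply: HgX; slia.
      case: (ltngtP a k) => Hak'.
      - case: (posnP a) => Ha0; last by have := P2 a Ha0 Hak'; rewrite paN.
        subst a; right; split => //.
        case: (ltngtP (b - k.+1) m) => Hj; first by have := R1 _ Hj; rewrite e_sym Eab.
        + slia.
        + slia.
      - slia.
      - subst a; left.
        case: (posnP (b - k.+1)) => Hj; first slia.
        have Hjm : b - k.+1 <= m by slia.
        by have := R2 _ Hj Hjm; rewrite Eab.
    * left; case: (ltngtP b a.+1) => // H; first slia.
      have H' : (a - k.+1).+1 < b - k.+1 by slia.
      by have := R3 _ _ H' (ltac:(slia)); rewrite Eab.
Qed.


Lemma reach_N (X : {set T}) p a : a \in ~: X -> path (induced_rel e setT) a p -> last a p \in X ->
  exists2 v, v \in nbhd e X & connect (induced_rel e (~: X)) a v.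
Proof.
elim: p a => [|b p IH] a aY /=.
  by move=> _ aX; move: aY; rewrite inE aX.
move=> /andP [/and3P [_ _ Eab] Hp] Hl.
case: (boolP (b \in X)) => bX.
- exists a => //. rewrite inN; move: (aY); rewrite inE => -> /=.
  by apply/existsP; exists b; rewrite bX e_sym Eab.
- have bY : b \in ~: X by rewrite inE.
  have [v vN Hv] := IH b bY Hp Hl.
  exists v => //; apply: connect_trans _ Hv; apply: connect1.
  by rewrite /induced_rel /= aY bY Eab.
Qed.

End G.

Theorem lemma2p1 (T : finType) (e : rel T) (e_sym : symmetric e) (e_irr : irreflexive e)
  (X : {set T}) :
  connected_on e [set: T] -> chordal e -> connected_on e X ->
  exists f : {set T} -> {set T},
    [/\ {in components e (nbhd e X), forall C : {set T}, f C \in components e (~: X)},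
        {in components e (nbhd e X) &, injective f},
        {in components e (~: X), forall H : {set T}, exists2 C, C \in components e (nbhd e X) & f C = H} &
        {in components e (nbhd e X), forall C : {set T},
          {in components e (~: X), forall H : {set T}, C \subset H <-> H = f C}}].
Proof.
move=> HG Hch HXc.
have [HXne HX] := HXc.
pose f (C : {set T}) := if [pick x in C] is Some x then comp_of e (~: X) x else set0.
have fC : forall c, c \in nbhd e X -> f (comp_of e (nbhd e X) c) = comp_of e (~: X) c.
  move=> c cN; rewrite /f; case: pickP => [x Hx|H].
  - apply: (comp_same e_sym); exact: comp_mono (NsubY e X) Hx.
  - by have := H c; rewrite inE connect0.
exists f; split.
- move=> C /imsetP [c cN ->]; rewrite fC //; apply: imset_f; exact: (subsetP (NsubY e X)).
- move=> C1 C2 /imsetP [c1 c1N ->] /imsetP [c2 c2N ->]; rewrite !fC // => Ef.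
  case: (boolP (c2 \in comp_of e (nbhd e X) c1)) => H.
  + by symmetry; apply: (comp_same e_sym).
  + exfalso; apply: (key e_sym e_irr Hch HXc c1N c2N _ H).
    rewrite Ef; exact: comp_in.
- move=> H /imsetP [h hY ->].
  have [x xX] := set0Pn _ HXne.
  have /connectP [p Hp Hl] := HG.2 h x (in_setT h) (in_setT x).
  rewrite Hl in xX.
  have [v vN Hv] := reach_N e_sym hY Hp xX.
  exists (comp_of e (nbhd e X) v); first by apply: imset_f.
  rewrite fC //; apply: (comp_same e_sym); by rewrite inE.
- move=> C /imsetP [c cN ->] H /imsetP [h hY ->]; rewrite fC //; split.
  + move=> /subsetP Hs; have := Hs c (comp_in _ _ _). by move=> /(comp_same e_sym) ->.
  + move=> ->; apply/subsetP => z; exact: comp_mono (NsubY e X).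
Qed.
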